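(* Let $\sigma$ be a completely erasing $k$-block substitution with $w_\epsilon\ne1^k$ that satisfies the optimality condition. Then $f_\sigma$ is Devaney chaotic. That is: (a) there is a point whose $f_\sigma$-orbit is dense in $\mathbb I$; (b) the $f_\sigma$-periodic points are dense in $\mathbb I$; (c) $f_\sigma$ has sensitive dependence on initial conditions.
   Context: Notation: $\mathbb I=[0,1]$. $\{0,1\}^*$ and $\{0,1\}^\omega$ denote finite and infinite binary words, and $\epsilon$ is the empty word. For a word $w$, set $0.w=\sum_iw_i2^{-i}$. For $x\in(0,1]$, $\widetilde x$ is the unique infinite binary expansion of $x$ not ending in $0^\infty$. Fix $k\ge2$. An erasing $k$-block substitution is a map $\sigma:\{0,1\}^k\to\{0,1\}^*$ with exactly one block $w_\epsilon$ such that $\sigma(w_\epsilon)=\epsilon$. $\sigma$ is alternating if there are $\sigma_1,\dots,\sigma_k:\{0,1\}\to\{0,1\}^*$ with $\sigma(b_1\cdots b_k)=\sigma_1(b_1)\cdots\sigma_k(b_k)$. It is then extended to all finite or infinite words by $\sigma(u)=\prod_j\sigma_{((j-1)\bmod k)+1}(u_j)$. $\sigma$ is completely erasing if it is erasing and alternating, and every $w\in\{0,1\}^*$ satisfies $\sigma^n(w)=\epsilon$ for some $n\in\mathbb N$. The map $f_\sigma:\mathbb I\to\mathbb I$ is defined by $f_\sigma(x)=0.\sigma(\widetilde x)$ if $x\in(0,1]$ and $\widetilde x\neq w_\epsilon^\infty$, and $f_\sigma(x)=0$ otherwise. Optimality condition: every $w\in\{0,1\}^\omega$ can be written as $w=\prod_{i\ge1}\sigma(b_i)$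 with blocks $b_i\in\{0,1\}^k$ satisfying $\sigma(b_i)\ne\epsilon$. Sensitive dependence: there is $c>0$ such that for all $x\in\mathbb I$ and $\delta>0$ there exist $z$ with $|x-z|<\delta$ and $n\in\mathbb N$ with $|f_\sigma^n(x)-f_\sigma^n(z)|\ge c$. *)

(* Defs.v *)
From Stdlib Require Import Reals List Arith ClassicalEpsilon.
From Coquelicot Require Import Coquelicot.
Import ListNotations.
Open Scope R_scope.

(* Finite binary words are [list bool] (true = 1, false = 0);
   infinite binary words are [nat -> bool] (0-based: w 0 is the first letter). *)

(* An alternating k-block substitution is given by its factors:
   [s i] (for 0 <= i < k) is sigma_{i+1} : {0,1} -> {0,1}^*. On a block of length k this is the block map. *)
Definition sub_fin (k : nat) (s : nat -> bool -> list bool) (u : list bool)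
  : list bool :=
  concat (map (fun j => s (j mod k) (nth j u false)) (seq 0 (length u))).

Definition erasing_with (k : nat) (s : nat -> bool -> list bool) (w : list bool)
  : Prop :=
  length w = k /\
  forall b : list bool, length b = k -> (sub_fin k s b = [] <-> b = w).

Definition eventually_erases (k : nat) (s : nat -> bool -> list bool) : Prop :=
  forall u : list bool, exists n : nat, Nat.iter n (sub_fin k s) u = [].

Definition prefix (u : nat -> bool) (n : nat) : list bool := map u (seq 0 n).

Definition optimal (k : nat) (s : nat -> bool -> list bool) : Prop :=
  forall u : nat -> bool,
    exists b : nat -> list bool,
      (forall i, length (b i) = k /\ sub_fin k s (b i) <> []) /\
      forall n : nat,
        let p := concat (map (fun i => sub_fin k s (b i)) (seq 0 n)) in
        p = prefix u (length p).

(* 0.w for a finite word: sum_i w_i 2^{-i} (1-based i) *)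
Fixpoint fin_val (w : list bool) : R :=
  match w with
  | [] => 0
  | b :: w' => ((if b then 1 else 0) + fin_val w') / 2
  end.

Definition inf_val (w : nat -> bool) : R :=
  Series (fun i => if w i then (/ 2) ^ (S i) else 0).

Definition not_ending_in_zeros (w : nat -> bool) : Prop :=
  forall n : nat, exists m : nat, (n <= m)%nat /\ w m = true.

(* x~ : the (unique, for x in (0,1]) infinite binary expansion of x
   not ending in 0^infinity *)
Definition tilde (x : R) : nat -> bool :=
  epsilon (inhabits (fun _ : nat => true))
          (fun w => not_ending_in_zeros w /\ inf_val w = x).

(* 0.sigma(u) for an infinite word u: sigma(u) may be finite or infinite; its
   value is the limit of the values of sigma applied to the prefixes of u
   (these are exactly the prefixes of sigma(u), a nondecreasing sequence). *)
Definition sub_val (k : nat) (s : nat -> bool -> list bool) (u : nat -> bool)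
  : R :=
  real (Lim_seq (fun n => fin_val (sub_fin k s (prefix u n)))).

Definition periodic_word (k : nat) (w : list bool) : nat -> bool :=
  fun j => nth (j mod k) w false.

(* the map f_sigma : I -> I (extended by 0 outside I) *)
Definition f_sigma (k : nat) (s : nat -> bool -> list bool) (w : list bool)
  (x : R) : R :=
  if excluded_middle_informative
       ((0 < x <= 1) /\ tilde x <> periodic_word k w)
  then sub_val k s (tilde x) else 0.

Definition in_I (x : R) : Prop := 0 <= x <= 1.

Definition dense_orbit (f : R -> R) : Prop :=
  exists x, in_I x /\
    forall y eps, in_I y -> 0 < eps ->
      exists n : nat, Rabs (Nat.iter n f x - y) < eps.

Definition dense_periodic (f : R -> R) : Prop :=
  forall y eps, in_I y -> 0 < eps ->
    exists z, in_I z /\ Rabs (z - y) < eps /\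
      exists p : nat, (1 <= p)%nat /\ Nat.iter p f z = z.

Definition sensitive (f : R -> R) : Prop :=
  exists c, 0 < c /\
    forall x delta, in_I x -> 0 < delta ->
      exists z, in_I z /\ Rabs (x - z) < delta /\
        exists n : nat, c <= Rabs (Nat.iter n f x - Nat.iter n f z).

(* Main.v *)
Require Import Defs.
From Stdlib Require Import Reals List Arith.
From Coquelicot Require Import Coquelicot.
From Stdlib Require Import Lia Lra ClassicalEpsilon Classical FunctionalExtensionality.
Import ListNotations.
Open Scope R_scope.

Fixpoint sfo (k : nat) (s : nat -> bool -> list bool) (o : nat) (X : list bool) : list bool :=
  match X with
  | [] => []
  | b :: X' => s (o mod k) b ++ sfo k s (S o) X'
  end.

Definition sig (k : nat) (s : nat -> bool -> list bool) (n : nat) (X : list bool) : list bool := Nat.iter n (sfo k s 0) X.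

Definition pl (A B : list bool) : Prop := exists C, B = A ++ C.

Lemma pl_refl A : pl A A.
Proof. exists []. now rewrite app_nil_r. Qed.

Lemma pl_app A B : pl A (A ++ B).
Proof. now exists B. Qed.

Lemma pl_trans A B C : pl A B -> pl B C -> pl A C.
Proof. intros [D ->] [E ->]. exists (D ++ E). now rewrite app_assoc. Qed.

Lemma pl_length A B : pl A B -> (length A <= length B)%nat.
Proof. intros [D ->]. rewrite length_app. lia. Qed.

Lemma pl_nth A B i : pl A B -> (i < length A)%nat -> nth i A false = nth i B false.
Proof. intros [D ->] H. now rewrite app_nth1. Qed.

Lemma pl_of_nth A B : (length A <= length B)%nat ->
  (forall i, (i < length A)%nat -> nth i A false = nth i B false) -> pl A B.
Proof.
  intros H1 H2. exists (skipn (length A) B).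
  rewrite <- (firstn_skipn (length A) B) at 1. f_equal.
  apply nth_ext with false false.
  - rewrite length_firstn. lia.
  - intros n Hn. rewrite length_firstn in Hn. rewrite nth_firstn.
    destruct (Nat.ltb_spec n (length A)); [|lia]. symmetry. apply H2. lia.
Qed.

Lemma pl_cmp A B Z : pl A Z -> pl B Z -> (length A <= length B)%nat -> pl A B.
Proof.
  intros HA HB Hl. apply pl_of_nth; auto.
  intros i Hi. rewrite (pl_nth A Z i HA Hi). symmetry. apply pl_nth; auto. lia.
Qed.

Lemma sub_fin_sfo_gen k s X o :
  concat (map (fun j => s ((o + j) mod k) (nth j X false)) (seq 0 (length X))) = sfo k s o X.
Proof.
  revert o. induction X as [|b X IH]; intro o; [reflexivity|].
  simpl length. simpl seq. simpl map. simpl concat. rewrite Nat.add_0_r. simpl sfo. f_equal.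
  rewrite <- seq_shift, map_map. rewrite <- (IH (S o)). f_equal. apply map_ext.
  intro j. simpl nth. f_equal. f_equal. lia.
Qed.

Lemma sub_fin_sfo k s X : sub_fin k s X = sfo k s 0 X.
Proof. unfold sub_fin. exact (sub_fin_sfo_gen k s X 0). Qed.

Lemma sfo_app k s o A B : sfo k s o (A ++ B) = sfo k s o A ++ sfo k s (o + length A) B.
Proof.
  revert o. induction A as [|b A IH]; intro o; simpl.
  - now rewrite Nat.add_0_r.
  - rewrite IH, app_assoc. replace (o + S (length A))%nat with (S o + length A)%nat by lia. reflexivity.
Qed.

Lemma sfo_mod k s X o o' : o mod k = o' mod k -> sfo k s o X = sfo k s o' X.
Proof.
  revert o o'. induction X as [|b X IH]; intros o o' H; simpl; auto.
  rewrite H. f_equal. apply IH.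
  replace (S o) with (1 + o)%nat by lia. replace (S o') with (1 + o')%nat by lia.
  rewrite <- (Nat.Div0.add_mod_idemp_r 1 o), <- (Nat.Div0.add_mod_idemp_r 1 o'), H. reflexivity.
Qed.

Lemma sfo_nil_inv k s X o : sfo k s o X = [] ->
  forall j, (j < length X)%nat -> s ((o + j) mod k) (nth j X false) = [].
Proof.
  revert o. induction X as [|b X IH]; intros o H j Hj; simpl in *; [lia|].
  apply app_eq_nil in H as [H1 H2]. destruct j.
  - now rewrite Nat.add_0_r.
  - replace (o + S j)%nat with (S o + j)%nat by lia. apply IH; auto. lia.
Qed.

Lemma sfo_nil k s X o :
  (forall j, (j < length X)%nat -> s ((o + j) mod k) (nth j X false) = []) -> sfo k s o X = [].
Proof.
  revert o. induction X as [|b X IH]; intros o H; simpl; auto.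
  pose proof (H 0%nat ltac:(simpl; lia)) as H0. rewrite Nat.add_0_r in H0. simpl in H0. rewrite H0. simpl.
  apply IH. intros j Hj. replace (S o + j)%nat with (o + S j)%nat by lia. apply (H (S j)). simpl; lia.
Qed.

Lemma sfo_mono k s o A B : pl A B -> pl (sfo k s o A) (sfo k s o B).
Proof. intros [C ->]. rewrite sfo_app. apply pl_app. Qed.

Lemma sig_S k s n X : sig k s (S n) X = sig k s n (sfo k s 0 X).
Proof. unfold sig. apply Nat.iter_succ_r. Qed.

Lemma sig_mono k s n A B : pl A B -> pl (sig k s n A) (sig k s n B).
Proof.
  revert A B. induction n; intros A B H; [exact H|].
  rewrite !sig_S. apply IHn. now apply sfo_mono.
Qed.

Lemma sig_nil k s n : sig k s n [] = [].
Proof. induction n; [reflexivity|]. rewrite sig_S. exact IHn. Qed.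

Lemma sig_iter k s n X : Nat.iter n (sub_fin k s) X = sig k s n X.
Proof.
  induction n; [reflexivity|]. simpl. rewrite IHn, sub_fin_sfo. reflexivity.
Qed.

Lemma sig_add k s a b X : sig k s (a + b) X = sig k s a (sig k s b X).
Proof. unfold sig. apply Nat.iter_add. Qed.

Definition Mb (k : nat) (s : nat -> bool -> list bool) : nat :=
  S (list_sum (map (fun i => length (s i true) + length (s i false))%nat (seq 0 k))).

Lemma list_sum_in l x : In x l -> (x <= list_sum l)%nat.
Proof. induction l; simpl; intros H; [easy|]. destruct H; subst; [lia|]. specialize (IHl H). lia. Qed.

Lemma Mb_bound k s o b : (k <> 0)%nat -> (length (s (o mod k) b) <= Mb k s)%nat.
Proof.
  intros Hk. unfold Mb.
  assert (H : In (length (s (o mod k) true) + length (s (o mod k) false))%nat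
            (map (fun i => length (s i true) + length (s i false))%nat (seq 0 k))).
  { apply in_map_iff. exists (o mod k)%nat. split; [reflexivity|]. apply in_seq. pose proof (Nat.mod_upper_bound o k Hk). lia. }
  apply list_sum_in in H. destruct b; lia.
Qed.

Lemma sfo_len k s o X : (k <> 0)%nat -> (length (sfo k s o X) <= Mb k s * length X)%nat.
Proof.
  intros Hk. revert o. induction X as [|b X IH]; intro o; cbn [sfo length]; [lia|].
  rewrite length_app. pose proof (Mb_bound k s o b Hk). specialize (IH (S o)). nia.
Qed.

Lemma Mb_pos k s : (1 <= Mb k s)%nat.
Proof. unfold Mb. lia. Qed.

Lemma sig_len_app k s p X Y : (k <> 0)%nat ->
  (length (sig k s p (X ++ Y)) <= length (sig k s p X) + Mb k s ^ p * length Y)%nat.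
Proof.
  intros Hk. revert X Y. induction p; intros X Y.
  - simpl. rewrite length_app. lia.
  - rewrite !sig_S, sfo_app. eapply Nat.le_trans; [apply IHp|].
    pose proof (sfo_len k s (0 + length X) Y Hk). rewrite Nat.pow_succ_r'.
    set (M := Mb k s) in *. set (Q := (M ^ p)%nat) in *. nia.
Qed.

Lemma sig_len k s p X : (k <> 0)%nat -> (length (sig k s p X) <= Mb k s ^ p * length X)%nat.
Proof. intros Hk. pose proof (sig_len_app k s p [] X Hk) as H. rewrite app_nil_l, sig_nil in H. simpl length in H. lia. Qed.

Lemma ivt (phi : list bool -> nat) (K A : nat) (G : list bool) :
  (forall G1 b, (phi (G1 ++ [b]) <= phi G1 + K)%nat) ->
  (phi [] <= A)%nat -> (A <= phi G)%nat ->
  exists G1, pl G1 G /\ (A <= phi G1 <= A + K)%nat.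
Proof.
  intros Hinc H0. induction G as [|b G IH] using rev_ind; intros HG.
  - exists []. split; [apply pl_refl|lia].
  - destruct (Nat.le_gt_cases A (phi G)) as [Hle|Hgt].
    + destruct (IH Hle) as [G1 [HG1 HA]]. exists G1. split; auto.
      eapply pl_trans; [exact HG1|apply pl_app].
    + exists (G ++ [b]). split; [apply pl_refl|]. specialize (Hinc G b). lia.
Qed.

Lemma wz k s w : (2 <= k)%nat -> erasing_with k s w ->
  forall o, s (o mod k) (nth (o mod k) w false) = [].
Proof.
  intros Hk [Hlw Her] o.
  assert (H : sfo k s 0 w = []) by (rewrite <- sub_fin_sfo; now apply Her).
  pose proof (sfo_nil_inv k s w 0 H (o mod k)) as H1.
  rewrite Nat.add_0_l, Nat.Div0.mod_mod in H1. apply H1. rewrite Hlw. apply Nat.mod_upper_bound. lia.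
Qed.

Fixpoint wpat (k : nat) (w : list bool) (o n : nat) : list bool :=
  match n with
  | O => []
  | S n => nth (o mod k) w false :: wpat k w (S o) n
  end.

Lemma wpat_len k w o n : length (wpat k w o n) = n.
Proof. revert o; induction n; intro o; simpl; auto. Qed.

Lemma wpat_nth k w o n j : (j < n)%nat -> nth j (wpat k w o n) false = nth ((o + j) mod k) w false.
Proof.
  revert o j; induction n; intros o j Hj; [lia|]. destruct j; simpl.
  - now rewrite Nat.add_0_r.
  - rewrite IHn by lia. replace (S o + j)%nat with (o + S j)%nat by lia. reflexivity.
Qed.

Lemma sfo_wpat k s w o n : (2 <= k)%nat -> erasing_with k s w -> sfo k s o (wpat k w o n) = [].
Proof.
  intros Hk Her. revert o; induction n; intro o; simpl; auto. rewrite wz by auto. simpl. apply IHn.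
Qed.

Lemma sfo_pl_wpat k s w o n pp : (2 <= k)%nat -> erasing_with k s w ->
  pl pp (wpat k w o n) -> sfo k s o pp = [].
Proof.
  intros Hk Her [C HC]. pose proof (sfo_wpat k s w o n Hk Her) as H. rewrite HC, sfo_app in H.
  now apply app_eq_nil in H.
Qed.

Lemma align_mod k o : (k <> 0)%nat -> ((o + (k - o mod k)) mod k = 0 mod k)%nat.
Proof.
  intros Hk. pose proof (Nat.div_mod_eq o k). pose proof (Nat.mod_upper_bound o k Hk).
  set (q := (o / k)%nat) in *. set (r := (o mod k)%nat) in *.
  replace (o + (k - r))%nat with ((q + 1) * k)%nat by nia.
  rewrite Nat.Div0.mod_mul, Nat.Div0.mod_0_l. reflexivity.
Qed.

Lemma concat_len_ge (f : nat -> list bool) a n :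
  (forall i, f i <> []) -> (n <= length (concat (map f (seq a n))))%nat.
Proof.
  intros Hf. revert a. induction n; intro a; simpl; [lia|]. rewrite length_app.
  specialize (IHn (S a)). destruct (f a) eqn:E; [now elim (Hf a)|]. simpl. lia.
Qed.

Lemma sfo_concat k s (b : nat -> list bool) a n : (k <> 0)%nat ->
  (forall i, length (b i) = k) ->
  sfo k s 0 (concat (map b (seq a n))) = concat (map (fun i => sub_fin k s (b i)) (seq a n)).
Proof.
  intros Hk Hb. revert a. induction n; intro a; simpl; auto.
  rewrite sfo_app, Hb, sub_fin_sfo. f_equal. rewrite <- IHn. apply sfo_mod.
  simpl. rewrite Nat.Div0.mod_same, Nat.Div0.mod_0_l. reflexivity.
Qed.

Lemma nth_prefix (u : nat -> bool) m j : (j < m)%nat -> nth j (prefix u m) false = u j.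
Proof.
  intros H. unfold prefix.
  rewrite nth_indep with (d' := u 0%nat) by (rewrite length_map, length_seq; lia).
  rewrite map_nth, seq_nth by lia. reflexivity.
Qed.

Lemma pre_aligned k s : (2 <= k)%nat -> optimal k s -> forall T, exists T0, pl T (sfo k s 0 T0).
Proof.
  intros Hk Hopt T. destruct (Hopt (fun i => nth i T false)) as [b [Hb Hp]].
  set (n := length T). specialize (Hp n). simpl in Hp.
  set (P := concat (map (fun i => sub_fin k s (b i)) (seq 0 n))) in *.
  exists (concat (map b (seq 0 n))). rewrite sfo_concat by (try lia; intro i; apply Hb).
  fold P. assert (Hl : (n <= length P)%nat).
  { apply concat_len_ge. intro i. apply Hb. }
  apply pl_of_nth; [exact Hl|]. intros i Hi. rewrite Hp. rewrite nth_prefix by lia. reflexivity.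
Qed.

Lemma pre_off k s w : (2 <= k)%nat -> erasing_with k s w -> optimal k s ->
  forall o T, exists T', pl T (sfo k s o T').
Proof.
  intros Hk Her Hopt o T. destruct (pre_aligned k s Hk Hopt T) as [T0 HT0].
  exists (wpat k w o (k - o mod k) ++ T0). rewrite sfo_app, sfo_wpat by auto. simpl.
  rewrite wpat_len. rewrite (sfo_mod k s T0 _ 0). exact HT0. apply align_mod. lia.
Qed.

Lemma ext k s w : (2 <= k)%nat -> erasing_with k s w -> optimal k s ->
  forall n F T, exists G, pl (sig k s n F ++ T) (sig k s n (F ++ G)).
Proof.
  intros Hk Her Hopt n. induction n; intros F T.
  - exists T. apply pl_refl.
  - destruct (pre_off k s w Hk Her Hopt (length (sig k s n F)) T) as [T' HT'].
    destruct (IHn F T') as [G [C HC]]. exists G.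
    change (sig k s (S n) F) with (sfo k s 0 (sig k s n F)).
    change (sig k s (S n) (F ++ G)) with (sfo k s 0 (sig k s n (F ++ G))).
    rewrite HC, <- app_assoc, sfo_app, sfo_app. simpl.
    destruct HT' as [D HD]. rewrite HD. exists (D ++ sfo k s (length (sig k s n F) + length T') C).
    now rewrite !app_assoc.
Qed.

Lemma erase_ge k s : eventually_erases k s -> forall X, exists m, forall m', (m <= m')%nat -> sig k s m' X = [].
Proof.
  intros Hee X. destruct (Hee X) as [m Hm]. rewrite sig_iter in Hm. exists m. intros m' Hm'.
  replace m' with ((m' - m) + m)%nat by lia. rewrite sig_add, Hm. apply sig_nil.
Qed.

Lemma eone k s w : (2 <= k)%nat -> erasing_with k s w -> (exists i0, (i0 < k)%nat /\ nth i0 w false = true) ->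
  forall o, exists E, sfo k s o E = [] /\ exists j, (j < length E)%nat /\ nth j E false = true.
Proof.
  intros Hk Her [i0 [Hi0 Hw]] o. exists (wpat k w o (2 * k)). split; [apply sfo_wpat; auto|].
  exists (k - o mod k + i0)%nat. pose proof (Nat.mod_upper_bound o k ltac:(lia)).
  rewrite wpat_len. split; [lia|]. rewrite wpat_nth by lia.
  replace (o + (k - o mod k + i0))%nat with ((o + (k - o mod k)) + i0)%nat by lia.
  rewrite <- Nat.Div0.add_mod_idemp_l, align_mod by lia. rewrite Nat.Div0.mod_0_l. simpl.
  rewrite Nat.mod_small by lia. exact Hw.
Qed.

Lemma sfo_app0 k s A B : sfo k s 0 (A ++ B) = sfo k s 0 A ++ sfo k s (length A) B.
Proof. apply sfo_app. Qed.

Lemma nth_true_lt (l : list bool) i : nth i l false = true -> (i < length l)%nat.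
Proof.
  intros H. destruct (Nat.lt_ge_cases i (length l)) as [h|h]; auto.
  rewrite nth_overflow in H by exact h. discriminate.
Qed.

Lemma ones_mono (X Y : list bool) idx : pl X Y -> nth idx X false = true -> nth idx Y false = true.
Proof. intros HXY H. rewrite <- (pl_nth X Y idx HXY (nth_true_lt X idx H)). exact H. Qed.

Lemma gen k s w : (2 <= k)%nat -> erasing_with k s w -> optimal k s ->
  (exists i0, (i0 < k)%nat /\ nth i0 w false = true) ->
  forall p F, exists H, sig k s p (F ++ H) = sig k s p F /\
    forall n, (n < p)%nat -> exists idx, (length (sig k s n F) <= idx)%nat /\
      nth idx (sig k s n (F ++ H)) false = true.
Proof.
  intros Hk Her Hopt Hone p. induction p; intros F.
  - exists []. rewrite app_nil_r. split; [reflexivity|intros; lia].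
  - destruct (IHp (sfo k s 0 F)) as [H' [HH' Hones']].
    destruct p as [|p0].
    + destruct (eone k s w Hk Her Hone (length F)) as [E [HE [j [Hj HEj]]]].
      exists E. split.
      * change (sfo k s 0 (F ++ E) = sfo k s 0 F). rewrite sfo_app0, HE, app_nil_r. reflexivity.
      * intros n Hn. assert (n = 0%nat) by lia. subst n. exists (length F + j)%nat.
        change (sig k s 0 ?X) with X. split; [lia|].
        rewrite app_nth2 by lia. replace (length F + j - length F)%nat with j by lia. exact HEj.
    + set (o := length F).
      set (Pad := wpat k w (length (sfo k s 0 F) + length H') (Mb k s)).
      destruct (pre_off k s w Hk Her Hopt o (H' ++ Pad)) as [T' HT'].
      destruct (ivt (fun G1 => length (sfo k s o G1)) (Mb k s) (length H') T') as [G1 [HG1 HA]].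
      * intros G1 b. rewrite sfo_app, length_app.
        pose proof (sfo_len k s (o + length G1) [b] ltac:(lia)). simpl length in *. lia.
      * simpl. lia.
      * apply pl_length in HT'. rewrite length_app in HT'. unfold Pad in HT'. rewrite wpat_len in HT'. lia.
      * assert (HX1 : pl (sfo k s o G1) (H' ++ Pad)).
        { apply pl_cmp with (sfo k s o T'); auto. apply sfo_mono; auto.
          rewrite length_app. unfold Pad. rewrite wpat_len. lia. }
        assert (HX2 : pl H' (sfo k s o G1)).
        { apply pl_cmp with (sfo k s o T'). eapply pl_trans; [apply pl_app|exact HT'].
          apply sfo_mono; auto. lia. }
        destruct HX2 as [pp Hpp]. rewrite Hpp in HX1. destruct HX1 as [C HC].
        rewrite <- app_assoc in HC. apply app_inv_head in HC.
        assert (Hppz : sfo k s (length (sfo k s 0 F) + length H') pp = []).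
        { apply sfo_pl_wpat with w (Mb k s); auto. exists C. exact HC. }
        destruct (eone k s w Hk Her Hone (o + length G1)) as [E [HE [j [Hj HEj]]]].
        exists (G1 ++ E).
        assert (Hsf : sfo k s 0 (F ++ G1 ++ E) = (sfo k s 0 F ++ H') ++ pp).
        { rewrite sfo_app0, sfo_app. fold o. rewrite HE, app_nil_r, Hpp, app_assoc. reflexivity. }
        assert (Hkill : sig k s (S p0) ((sfo k s 0 F ++ H') ++ pp) = sig k s (S p0) (sfo k s 0 F ++ H')).
        { rewrite !sig_S, sfo_app0. rewrite length_app, Hppz, app_nil_r. reflexivity. }
        split.
        -- rewrite sig_S, Hsf, Hkill, HH'. rewrite <- sig_S. reflexivity.
        -- intros n Hn. destruct n as [|n'].
           ++ exists (length F + length G1 + j)%nat. change (sig k s 0 ?X) with X. split; [lia|].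
              rewrite app_assoc, app_nth2 by (rewrite length_app; lia). rewrite length_app.
              replace (length F + length G1 + j - (length F + length G1))%nat with j by lia. exact HEj.
           ++ destruct (Hones' n' ltac:(lia)) as [idx [Hidx Hnth]]. exists idx.
              rewrite !sig_S. split; [exact Hidx|]. rewrite Hsf.
              apply ones_mono with (sig k s n' (sfo k s 0 F ++ H')); auto.
              apply sig_mono, pl_app.
Qed.

Lemma pow_pos1 m p : (1 <= m)%nat -> (1 <= m ^ p)%nat.
Proof. intros H. induction p; simpl; nia. Qed.

Lemma pstep k s w : (2 <= k)%nat -> erasing_with k s w -> optimal k s ->
  forall p, (1 <= p)%nat -> forall F, pl (sig k s p F) F ->
  exists F', pl F (sig k s p F') /\ pl (sig k s p F') F' /\ (length F < length F')%nat /\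
    ((exists i0, (i0 < k)%nat /\ nth i0 w false = true) ->
     forall n, (n < p)%nat -> exists idx, (length (sig k s n F) <= idx)%nat /\
       nth idx (sig k s n F') false = true).
Proof.
  intros Hk Her Hopt p Hp F Hpre.
  assert (HHex : exists H, sig k s p (F ++ H) = sig k s p F /\
    ((exists i0, (i0 < k)%nat /\ nth i0 w false = true) ->
     forall n, (n < p)%nat -> exists idx, (length (sig k s n F) <= idx)%nat /\
       nth idx (sig k s n (F ++ H)) false = true)).
  { destruct (classic (exists i0, (i0 < k)%nat /\ nth i0 w false = true)) as [Hone|Hnone].
    - destruct (gen k s w Hk Her Hopt Hone p F) as [H [H1 H2]]. exists H. auto.
    - exists []. rewrite app_nil_r. split; auto. intro; contradiction. }
  destruct HHex as [H [HH Hones]].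
  set (F1 := F ++ H). set (Sp := wpat k w (length F1) (Mb k s ^ p)). set (F2 := F1 ++ Sp).
  assert (HF2 : sig k s p F2 = sig k s p F).
  { destruct p as [|p']; [lia|]. unfold F2. rewrite sig_S, sfo_app0. unfold Sp.
    rewrite sfo_wpat, app_nil_r by auto. rewrite <- sig_S. exact HH. }
  assert (HFF2 : pl F F2). { unfold F2, F1. rewrite <- app_assoc. apply pl_app. }
  assert (HlF2 : length F2 = (length F + length H + Mb k s ^ p)%nat).
  { unfold F2, F1, Sp. rewrite !length_app, wpat_len. lia. }
  assert (Hpre2 : pl (sig k s p F2) F2). { rewrite HF2. eapply pl_trans; eauto. }
  destruct Hpre2 as [T HT].
  destruct (ext k s w Hk Her Hopt p F2 T) as [G HG]. rewrite <- HT in HG.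
  destruct (ivt (fun G1 => length (sig k s p (F2 ++ G1))) (Mb k s ^ p) (length F) G) as [G1 [HG1 HA]].
  - intros G1 b. rewrite app_assoc. pose proof (sig_len_app k s p (F2 ++ G1) [b] ltac:(lia)).
    simpl length in *. lia.
  - simpl. rewrite app_nil_r, HF2. now apply pl_length.
  - apply pl_length in HG. apply pl_length in HFF2. lia.
  - exists (F2 ++ G1).
    assert (HZ1 : pl (sig k s p (F2 ++ G1)) (sig k s p (F2 ++ G))).
    { apply sig_mono. destruct HG1 as [C ->]. rewrite app_assoc. apply pl_app. }
    pose proof (pow_pos1 (Mb k s) p (Mb_pos k s)).
    split; [|split; [|split]].
    + apply pl_cmp with (sig k s p (F2 ++ G)); auto. eapply pl_trans; eauto. lia.
    + eapply pl_trans; [|apply pl_app]. apply pl_cmp with (sig k s p (F2 ++ G)); auto. lia.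
    + rewrite length_app. lia.
    + intros Hone n Hn. destruct (Hones Hone n Hn) as [idx [Hidx Hnth]]. exists idx. split; auto.
      eapply ones_mono; [|exact Hnth]. apply sig_mono.
      unfold F2, F1. exists (Sp ++ G1). rewrite !app_assoc. reflexivity.
Qed.

Lemma multi (P : list (list bool -> Prop)) F :
  (forall R, In R P -> (forall X Y, R X -> pl X Y -> R Y) /\ (forall X, pl F X -> exists G, R (X ++ G))) ->
  exists F', pl F F' /\ forall R, In R P -> R F'.
Proof.
  induction P as [|R P IH]; intros HP.
  - exists F. split; [apply pl_refl|]. intros R [].
  - destruct (IH (fun R' HR' => HP R' (or_intror HR'))) as [F1 [HF1 HP1]].
    destruct (HP R (or_introl eq_refl)) as [Hmono Hach].
    destruct (Hach F1 HF1) as [G HG]. exists (F1 ++ G). split.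
    + eapply pl_trans; [exact HF1|apply pl_app].
    + intros R' [<-|HR']; auto. eapply (proj1 (HP R' (or_intror HR'))); [exact (HP1 R' HR')|apply pl_app].
Qed.

Fixpoint all_words (n : nat) : list (list bool) :=
  match n with
  | O => [[]]
  | S n => map (cons true) (all_words n) ++ map (cons false) (all_words n)
  end.

Lemma all_words_in q : In q (all_words (length q)).
Proof.
  induction q as [|b q IH]; simpl; [now left|]. apply in_or_app. destruct b; [left|right]; now apply in_map.
Qed.

Definition DStep k s (j : nat) (F F' : list bool) : Prop :=
  pl F F' /\
  (forall n, (n <= j)%nat -> exists idx, (length (sig k s n F) <= idx)%nat /\ nth idx (sig k s n F') false = true) /\
  (forall q, length q = j -> exists m, pl q (sig k s m F')).

Lemma dstep_ex k s w : (2 <= k)%nat -> erasing_with k s w -> optimal k s -> eventually_erases k s ->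
  forall j F, exists F', DStep k s j F F'.
Proof.
  intros Hk Her Hopt Hee j F.
  destruct (multi (map (fun n X => exists idx, (length (sig k s n F) <= idx)%nat /\ nth idx (sig k s n X) false = true) (seq 0 (S j))
                   ++ map (fun q X => exists m, pl q (sig k s m X)) (all_words j)) F) as [F' [HF' HR]].
  - intros R HR. apply in_app_or in HR. destruct HR as [HR|HR]; apply in_map_iff in HR; destruct HR as [a [<- Ha]].
    + split.
      * intros X Y [idx [H1 H2]] HXY. exists idx. split; auto. eapply ones_mono; [apply sig_mono; eauto|exact H2].
      * intros X HX. destruct (ext k s w Hk Her Hopt a X [true]) as [G HG]. exists G.
        exists (length (sig k s a X)). split.
        -- apply pl_length. apply sig_mono. exact HX.
        -- apply ones_mono with (sig k s a X ++ [true]); auto. rewrite app_nth2 by lia.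
           rewrite Nat.sub_diag. reflexivity.
    + split.
      * intros X Y [m Hm] HXY. exists m. eapply pl_trans; [exact Hm|apply sig_mono; auto].
      * intros X HX. destruct (erase_ge k s Hee X) as [m Hm].
        destruct (ext k s w Hk Her Hopt m X a) as [G HG]. exists G, m. rewrite Hm in HG by lia. exact HG.
  - exists F'. split; [exact HF'|split].
    + intros n Hn. apply (HR (fun X => exists idx, (length (sig k s n F) <= idx)%nat /\ nth idx (sig k s n X) false = true)).
      apply in_or_app. left. apply in_map_iff. exists n. split; auto. apply in_seq. lia.
    + intros q Hq. apply (HR (fun X => exists m, pl q (sig k s m X))).
      apply in_or_app. right. apply in_map_iff. exists q. split; auto. rewrite <- Hq. apply all_words_in.
Qed.

Lemma build_chain (St : nat -> list bool -> list bool -> Prop) :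
  (forall j F, exists F', St j F F') -> forall F0, exists X : nat -> list bool, X 0%nat = F0 /\ forall j, St j (X j) (X (S j)).
Proof.
  intros Hex F0.
  assert (g : forall j F, {F' | St j F F'}) by (intros; apply constructive_indefinite_description; auto).
  exists (fix X j := match j with O => F0 | S j' => proj1_sig (g j' (X j')) end).
  split; [reflexivity|]. intro j. exact (proj2_sig (g j _)).
Qed.

Definition limw (X : nat -> list bool) : nat -> bool :=
  fun i => nth i (X (epsilon (inhabits 0%nat) (fun j => (i < length (X j))%nat))) false.

Definition chain (X : nat -> list bool) : Prop := forall j, pl (X j) (X (S j)).

Lemma chain_le X j j' : chain X -> (j <= j')%nat -> pl (X j) (X j').
Proof.
  intros HX Hle. induction Hle; [apply pl_refl|]. eapply pl_trans; eauto.
Qed.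

Lemma chain_cmp X i j j' : chain X -> (i < length (X j))%nat -> (i < length (X j'))%nat ->
  nth i (X j) false = nth i (X j') false.
Proof.
  intros HX H1 H2. destruct (Nat.le_ge_cases j j') as [h|h].
  - apply pl_nth; auto. apply chain_le; auto.
  - symmetry. apply pl_nth; auto. apply chain_le; auto.
Qed.

Lemma limw_spec X i j : chain X -> (i < length (X j))%nat -> limw X i = nth i (X j) false.
Proof.
  intros HX Hi. unfold limw.
  assert (He : (i < length (X (epsilon (inhabits 0%nat) (fun j => (i < length (X j))%nat))))%nat).
  { apply epsilon_spec. exists j. exact Hi. }
  apply chain_cmp; auto.
Qed.

Definition prw (X : list bool) (u : nat -> bool) : Prop :=
  forall i, (i < length X)%nat -> nth i X false = u i.

Lemma pre_limw X j : chain X -> prw (X j) (limw X).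
Proof. intros HX i Hi. symmetry. apply limw_spec; auto. Qed.

Lemma pre_pl A B u : pl A B -> prw B u -> prw A u.
Proof. intros HAB HB i Hi. rewrite (pl_nth A B i HAB Hi). apply HB. apply pl_length in HAB. lia. Qed.

Definition unb (X : nat -> list bool) : Prop := forall L, exists j, (L <= length (X j))%nat.
Definition goodc (X : nat -> list bool) : Prop :=
  forall N, exists j idx, (N <= idx)%nat /\ nth idx (X j) false = true.

Lemma goodc_unb X : goodc X -> unb X.
Proof.
  intros H L. destruct (H L) as [j [idx [H1 H2]]]. exists j. apply nth_true_lt in H2. lia.
Qed.

Lemma good_limw X : chain X -> goodc X -> not_ending_in_zeros (limw X).
Proof.
  intros HX H n. destruct (H n) as [j [idx [H1 H2]]]. exists idx. split; auto.
  rewrite (limw_spec X idx j HX (nth_true_lt _ _ H2)). exact H2.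
Qed.

Lemma length_prefix u m : length (prefix u m) = m.
Proof. unfold prefix. now rewrite length_map, length_seq. Qed.

Lemma prefix_limw X j m : chain X -> (m <= length (X j))%nat -> prefix (limw X) m = firstn m (X j).
Proof.
  intros HX Hm. apply nth_ext with false false.
  - rewrite length_prefix, length_firstn. lia.
  - intros n Hn. rewrite length_prefix in Hn. rewrite nth_prefix by lia. rewrite nth_firstn.
    destruct (Nat.ltb_spec n m); [|lia]. apply limw_spec; auto. lia.
Qed.

Definition img k s (u v : nat -> bool) : Prop :=
  (forall m, prw (sub_fin k s (prefix u m)) v) /\
  (forall L, exists m, (L <= length (sub_fin k s (prefix u m)))%nat).

Lemma chain_sig k s n X : chain X -> chain (fun j => sig k s n (X j)).
Proof. intros HX j. apply sig_mono, HX. Qed.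

Lemma img_limw k s X : chain X -> unb X -> unb (fun j => sfo k s 0 (X j)) ->
  img k s (limw X) (limw (fun j => sfo k s 0 (X j))).
Proof.
  intros HX HuX HuY. assert (HY : chain (fun j => sfo k s 0 (X j))) by exact (chain_sig k s 1 X HX).
  split.
  - intros m. destruct (HuX m) as [j Hj]. rewrite (prefix_limw X j m HX Hj), sub_fin_sfo.
    apply pre_pl with (sfo k s 0 (X j)).
    + apply sfo_mono. exists (skipn m (X j)). symmetry. apply firstn_skipn.
    + apply (pre_limw (fun j => sfo k s 0 (X j)) j HY).
  - intros L. destruct (HuY L) as [j Hj]. exists (length (X j)).
    rewrite (prefix_limw X j _ HX (le_n _)), firstn_all, sub_fin_sfo. exact Hj.
Qed.

Definition wt (u : nat -> bool) (i : nat) : R := if u i then (/2) ^ (S i) else 0.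

Lemma half_pow_pos n : 0 < (/2) ^ n.
Proof. apply pow_lt. lra. Qed.

Lemma geom_half : is_series (fun i => /2 * (/2) ^ i) 1.
Proof.
  replace 1 with (/2 * / (1 - /2)) by field.
  apply (is_series_scal_l (/2) (fun i => (/2)^i)). apply is_series_geom. rewrite Rabs_pos_eq; lra.
Qed.

Lemma ex_wt u : ex_series (wt u).
Proof.
  apply (@ex_series_le R_AbsRing R_CompleteNormedModule) with (fun i => /2 * (/2) ^ i).
  - intro n. change (norm (wt u n)) with (Rabs (wt u n)). unfold wt. pose proof (half_pow_pos n).
    destruct (u n); simpl.
    + rewrite Rabs_pos_eq; nra.
    + rewrite Rabs_R0. nra.
  - exists 1. exact geom_half.
Qed.

Lemma V1 u : inf_val u = ((if u 0%nat then 1 else 0) + inf_val (fun i => u (S i))) / 2.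
Proof.
  unfold inf_val. fold (wt u). fold (wt (fun i => u (S i))).
  rewrite (Series_incr_1 (wt u) (ex_wt u)).
  rewrite (Series_ext (fun k => wt u (S k)) (fun k => /2 * wt (fun i => u (S i)) k)).
  - rewrite Series_scal_l. unfold wt at 1. destruct (u 0%nat); simpl; field.
  - intro n. unfold wt. destruct (u (S n)); simpl; ring.
Qed.

Lemma V2 u : 0 <= inf_val u <= 1.
Proof.
  unfold inf_val. fold (wt u). split.
  - replace 0 with (Series (fun n => 0 * wt u n)) by (rewrite Series_scal_l; ring).
    apply Series_le; [|apply ex_wt]. intro n. unfold wt. pose proof (half_pow_pos (S n)).
    destruct (u n); lra.
  - rewrite <- (is_series_unique _ _ geom_half). apply Series_le; [|exists 1; exact geom_half].
    intro n. unfold wt. pose proof (half_pow_pos n). destruct (u n); simpl; lra.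
Qed.

Lemma Vpos u i : u i = true -> 0 < inf_val u.
Proof.
  revert u. induction i; intros u Hu.
  - rewrite V1, Hu. pose proof (V2 (fun i => u (S i))). lra.
  - rewrite V1. specialize (IHi (fun i => u (S i)) Hu). destruct (u 0%nat); lra.
Qed.

Definition shiftn (n : nat) (u : nat -> bool) : nat -> bool := fun i => u (n + i)%nat.

Lemma Vapp X u : prw X u -> inf_val u = fin_val X + (/2) ^ (length X) * inf_val (shiftn (length X) u).
Proof.
  revert u. induction X as [|b X IH]; intros u Hpre.
  - simpl. unfold shiftn. simpl. rewrite Rmult_1_l, Rplus_0_l. reflexivity.
  - rewrite V1. assert (H0 : u 0%nat = b) by (symmetry; apply (Hpre 0%nat); simpl; lia).
    assert (Hs : prw X (fun i => u (S i))).
    { intros i Hi. apply (Hpre (S i)). simpl. lia. }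
    rewrite (IH _ Hs). rewrite H0. simpl fin_val. simpl length.
    change (shiftn (length X) (fun i => u (S i))) with (shiftn (S (length X)) u).
    simpl pow. field.
Qed.

Lemma Vbounds X u : prw X u -> fin_val X <= inf_val u <= fin_val X + (/2) ^ (length X).
Proof.
  intros H. rewrite (Vapp X u H). pose proof (V2 (shiftn (length X) u)). pose proof (half_pow_pos (length X)).
  nra.
Qed.

Lemma good_shift u : not_ending_in_zeros u -> not_ending_in_zeros (fun i => u (S i)).
Proof.
  intros H n. destruct (H (S n)) as [m [Hm Hu]]. exists (m - 1)%nat. split; [lia|].
  replace (S (m - 1)) with m by lia. exact Hu.
Qed.

Lemma good_pos u : not_ending_in_zeros u -> 0 < inf_val u.
Proof. intros H. destruct (H 0%nat) as [m [_ Hm]]. exact (Vpos u m Hm). Qed.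

Lemma uniq_val : forall n u u', not_ending_in_zeros u -> not_ending_in_zeros u' ->
  inf_val u = inf_val u' -> u n = u' n.
Proof.
  assert (H0 : forall u u', not_ending_in_zeros u -> not_ending_in_zeros u' ->
    inf_val u = inf_val u' -> u 0%nat = u' 0%nat).
  { intros u u' Hu Hu' He. rewrite V1, (V1 u') in He.
    pose proof (good_pos _ (good_shift u Hu)). pose proof (good_pos _ (good_shift u' Hu')).
    pose proof (V2 (fun i => u (S i))). pose proof (V2 (fun i => u' (S i))).
    destruct (u 0%nat), (u' 0%nat); auto; lra. }
  intro n. induction n; intros u u' Hu Hu' He; [now apply H0|].
  apply (IHn (fun i => u (S i)) (fun i => u' (S i))); try apply good_shift; auto.
  rewrite V1, (V1 u') in He. rewrite (H0 u u' Hu Hu') in He by (rewrite V1, (V1 u'); exact He). lra.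
Qed.

Lemma tilde_val u : not_ending_in_zeros u -> tilde (inf_val u) = u.
Proof.
  intros Hu. unfold tilde.
  assert (H : (fun w => not_ending_in_zeros w /\ inf_val w = inf_val u)
                (epsilon (inhabits (fun _ : nat => true)) (fun w => not_ending_in_zeros w /\ inf_val w = inf_val u))).
  { apply epsilon_spec. exists u. auto. }
  destruct H as [H1 H2]. apply functional_extensionality. intro n. apply uniq_val; auto.
Qed.

Lemma half_pow_le1 n : (/2) ^ n <= 1.
Proof. induction n; simpl; [lra|]. pose proof (half_pow_pos n). lra. Qed.

Lemma pow_half_le a b : (a <= b)%nat -> (/2) ^ b <= (/2) ^ a.
Proof.
  intros H. replace b with (a + (b - a))%nat by lia. rewrite pow_add.
  pose proof (half_pow_pos a). pose proof (half_pow_le1 (b - a)). nra.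
Qed.

Lemma prefix_pl u m n : (m <= n)%nat -> pl (prefix u m) (prefix u n).
Proof.
  intros H. exists (map u (seq m (n - m))). unfold prefix. rewrite <- map_app, <- seq_app.
  f_equal. f_equal. lia.
Qed.

Lemma sub_val_img k s u v : img k s u v -> sub_val k s u = inf_val v.
Proof.
  intros [Hpre Hunb]. unfold sub_val.
  assert (Hl : is_lim_seq (fun n => fin_val (sub_fin k s (prefix u n))) (inf_val v)).
  { apply is_lim_seq_spec. intros eps.
    destruct (pow_lt_1_zero (/2) ltac:(rewrite Rabs_pos_eq; lra) eps (cond_pos eps)) as [L HL].
    destruct (Hunb L) as [m0 Hm0]. exists m0. intros n Hn.
    assert (HLn : (L <= length (sub_fin k s (prefix u n)))%nat).
    { eapply Nat.le_trans; [exact Hm0|]. rewrite !sub_fin_sfo. apply pl_length, sfo_mono, prefix_pl. lia. }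
    pose proof (Vbounds _ _ (Hpre n)). pose proof (pow_half_le _ _ HLn).
    specialize (HL L (le_n _)). rewrite Rabs_pos_eq in HL by (apply pow_le; lra).
    rewrite Rabs_minus_sym, Rabs_pos_eq; lra. }
  rewrite (is_lim_seq_unique _ _ Hl). reflexivity.
Qed.

Lemma f_step k s w u v : (2 <= k)%nat -> erasing_with k s w ->
  not_ending_in_zeros u -> img k s u v -> f_sigma k s w (inf_val u) = inf_val v.
Proof.
  intros Hk Her Hu Himg. unfold f_sigma.
  destruct (excluded_middle_informative _) as [Hc|Hc].
  - rewrite tilde_val by auto. now apply sub_val_img.
  - exfalso. apply Hc. split; [split; [now apply good_pos|apply V2]|].
    rewrite tilde_val by auto. intro Hpw. destruct Himg as [_ Hunb].
    destruct (Hunb 1%nat) as [m Hm]. rewrite sub_fin_sfo in Hm.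
    rewrite sfo_nil in Hm; [simpl in Hm; lia|].
    intros j Hj. rewrite length_prefix in Hj. rewrite nth_prefix by lia. rewrite Hpw. unfold periodic_word.
    simpl. apply wz; auto.
Qed.

Lemma orbit k s w (Us : nat -> nat -> bool) N : (2 <= k)%nat -> erasing_with k s w ->
  (forall n, (n < N)%nat -> not_ending_in_zeros (Us n) /\ img k s (Us n) (Us (S n))) ->
  Nat.iter N (f_sigma k s w) (inf_val (Us 0%nat)) = inf_val (Us N).
Proof.
  intros Hk Her H. induction N; [reflexivity|].
  simpl. rewrite IHN by (intros; apply H; lia). destruct (H N ltac:(lia)). now apply f_step.
Qed.

Lemma approx m x : 0 <= x <= 1 -> exists X, length X = m /\ Rabs (fin_val X - x) <= (/2) ^ m.
Proof.
  revert x. induction m; intros x Hx.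
  - exists []. split; [reflexivity|]. simpl. unfold Rabs. destruct (Rcase_abs _); lra.
  - destruct (Rle_lt_dec x (/2)) as [h|h].
    + destruct (IHm (2 * x) ltac:(lra)) as [X [HX1 HX2]]. exists (false :: X). split; [simpl; lia|].
      simpl fin_val. simpl pow. revert HX2. unfold Rabs. destruct (Rcase_abs _); destruct (Rcase_abs _); intros; lra.
    + destruct (IHm (2 * x - 1) ltac:(lra)) as [X [HX1 HX2]]. exists (true :: X). split; [simpl; lia|].
      simpl fin_val. simpl pow. revert HX2. unfold Rabs. destruct (Rcase_abs _); destruct (Rcase_abs _); intros; lra.
Qed.

Lemma close_val X u x : prw X u -> Rabs (fin_val X - x) <= (/2) ^ (length X) ->
  Rabs (inf_val u - x) <= 2 * (/2) ^ (length X).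
Proof.
  intros H1 H2. pose proof (Vbounds X u H1). revert H2. unfold Rabs.
  destruct (Rcase_abs _); destruct (Rcase_abs _); intros; lra.
Qed.

Lemma small_m eps : 0 < eps -> exists m, 2 * (/2) ^ m < eps.
Proof.
  intros He. destruct (pow_lt_1_zero (/2) ltac:(rewrite Rabs_pos_eq; lra) (eps/2) ltac:(lra)) as [L HL].
  exists L. specialize (HL L (le_n _)). rewrite Rabs_pos_eq in HL by (apply pow_le; lra). lra.
Qed.

Lemma dchain_good k s X : (forall j, DStep k s j (X j) (X (S j))) ->
  chain X /\ forall n, goodc (fun j => sig k s n (X j)).
Proof.
  intros HS. split; [intro j; apply (HS j)|]. intros n.
  assert (Hlen : forall t, (t <= length (sig k s n (X (n + t)%nat)))%nat).
  { induction t; [lia|]. destruct (HS (n + t)%nat) as [_ [H2 _]].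
    destruct (H2 n ltac:(lia)) as [idx [Hi Hn]]. apply nth_true_lt in Hn.
    rewrite Nat.add_succ_r. lia. }
  intros N. destruct (HS (n + N)%nat) as [_ [H2 _]]. destruct (H2 n ltac:(lia)) as [idx [Hi Hn]].
  exists (S (n + N)), idx. split; auto. specialize (Hlen N). lia.
Qed.

Lemma chain_orbit k s w X N : (2 <= k)%nat -> erasing_with k s w -> chain X ->
  (forall n, (n < N)%nat -> goodc (fun j => sig k s n (X j)) /\ unb (fun j => sig k s (S n) (X j))) ->
  Nat.iter N (f_sigma k s w) (inf_val (limw X)) = inf_val (limw (fun j => sig k s N (X j))).
Proof.
  intros Hk Her HX H.
  apply (orbit k s w (fun n => limw (fun j => sig k s n (X j))) N Hk Her).
  intros n Hn. destruct (H n Hn) as [Hg Hu]. split.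
  - apply good_limw; auto. apply chain_sig; auto.
  - apply (img_limw k s (fun j => sig k s n (X j))); auto. apply chain_sig; auto. now apply goodc_unb.
Qed.

Lemma dorbit k s w X N : (2 <= k)%nat -> erasing_with k s w -> (forall j, DStep k s j (X j) (X (S j))) ->
  Nat.iter N (f_sigma k s w) (inf_val (limw X)) = inf_val (limw (fun j => sig k s N (X j))).
Proof.
  intros Hk Her HS. destruct (dchain_good k s X HS) as [HX Hg].
  apply chain_orbit; auto. intros n _. split; auto. apply goodc_unb, Hg.
Qed.

Lemma auto_good k s Y : (k <> 0)%nat -> (forall o, s (o mod k) false = []) -> chain Y ->
  unb (fun j => sfo k s 0 (Y j)) -> goodc Y.
Proof.
  intros Hk Hz HY Hu. apply NNPP. intro Hng.
  assert (HN : exists N, forall j idx, (N <= idx)%nat -> nth idx (Y j) false = false).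
  { apply NNPP. intro H1. apply Hng. intro N. apply NNPP. intro H2. apply H1. exists N.
    intros j idx Hidx. destruct (nth idx (Y j) false) eqn:E; auto. exfalso. apply H2. exists j, idx. auto. }
  destruct HN as [N HN]. destruct (Hu (Mb k s * N + 1)%nat) as [j Hj].
  rewrite <- (firstn_skipn N (Y j)) in Hj. rewrite sfo_app0 in Hj.
  rewrite (sfo_nil k s (skipn N (Y j))) in Hj.
  - rewrite app_nil_r in Hj. pose proof (sfo_len k s 0 (firstn N (Y j)) Hk).
    rewrite length_firstn in H. nia.
  - intros jj Hjj. rewrite nth_skipn, HN by lia. apply Hz.
Qed.

Theorem main k s w :
  (2 <= k)%nat -> erasing_with k s w -> eventually_erases k s -> optimal k s ->
  dense_orbit (f_sigma k s w) /\ dense_periodic (f_sigma k s w) /\ sensitive (f_sigma k s w).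
Proof.
  intros Hk Her Hee Hopt.
  assert (Hk0 : (k <> 0)%nat) by lia.
  split; [|split].
  -
    destruct (build_chain (DStep k s) (dstep_ex k s w Hk Her Hopt Hee) []) as [X [HX0 HS]].
    exists (inf_val (limw X)). split; [apply V2|]. intros y eps Hy Heps.
    destruct (small_m eps Heps) as [L HL]. destruct (approx L y Hy) as [q [Hq1 Hq2]].
    destruct (HS L) as [_ [_ H3]]. destruct (H3 q Hq1) as [m Hm]. exists m.
    rewrite (dorbit k s w X m Hk Her HS).
    destruct (dchain_good k s X HS) as [HXc _].
    assert (Hp : prw q (limw (fun j => sig k s m (X j)))).
    { eapply pre_pl; [exact Hm|]. apply (pre_limw (fun j => sig k s m (X j))). apply chain_sig; auto. }
    rewrite <- Hq1 in Hq2. pose proof (close_val q _ y Hp Hq2). rewrite Hq1 in H. lra.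
  -
    intros y eps Hy Heps.
    destruct (small_m eps Heps) as [L HL]. destruct (approx L y Hy) as [q [Hq1 Hq2]].
    destruct (erase_ge k s Hee q) as [p0 Hp0]. set (p := S p0).
    assert (Hpq : sig k s p q = []) by (apply Hp0; unfold p; lia).
    set (PSt := fun (j : nat) (F F' : list bool) => pl (sig k s p F) F ->
      pl F (sig k s p F') /\ pl (sig k s p F') F' /\ (length F < length F')%nat /\
      ((exists i0, (i0 < k)%nat /\ nth i0 w false = true) ->
       forall n, (n < p)%nat -> exists idx, (length (sig k s n F) <= idx)%nat /\
         nth idx (sig k s n F') false = true)).
    assert (Hex : forall j F, exists F', PSt j F F').
    { intros j F. destruct (classic (pl (sig k s p F) F)) as [h|h].
      - destruct (pstep k s w Hk Her Hopt p ltac:(unfold p; lia) F h) as [F' HF']. exists F'. intros _. exact HF'.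
      - exists F. intro; contradiction. }
    destruct (build_chain PSt Hex q) as [X [HX0 HS]].
    assert (Inv : forall j, pl (sig k s p (X j)) (X j)).
    { induction j. - rewrite HX0, Hpq. exists q. reflexivity. - exact (proj1 (proj2 (HS j IHj))). }
    assert (P1 : forall j, pl (X j) (sig k s p (X (S j)))) by (intro j; exact (proj1 (HS j (Inv j)))).
    assert (P3 : forall j, (length (X j) < length (X (S j)))%nat) by (intro j; exact (proj1 (proj2 (proj2 (HS j (Inv j)))))).
    assert (HXc : chain X) by (intro j; eapply pl_trans; [apply P1|apply Inv]).
    assert (Hlen : forall j, (j <= length (X j))%nat).
    { induction j; [lia|]. specialize (P3 j). lia. }
    assert (Hunbp : unb (fun j => sig k s p (X j))).
    { intros L'. exists (S L'). specialize (P1 L'). apply pl_length in P1. specialize (Hlen L'). lia. }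
    assert (Hunb : forall n, (n <= p)%nat -> unb (fun j => sig k s n (X j))).
    { intros n Hn L'. destruct (Hunbp (Mb k s ^ (p - n) * L')%nat) as [j Hj]. exists j.
      pose proof (sig_len k s (p - n) (sig k s n (X j)) Hk0). rewrite <- sig_add in H.
      replace (p - n + n)%nat with p in H by lia. pose proof (pow_pos1 (Mb k s) (p - n) (Mb_pos k s)).
      set (M := (Mb k s ^ (p - n))%nat) in *. nia. }
    assert (Hgood : forall n, (n < p)%nat -> goodc (fun j => sig k s n (X j))).
    { intros n Hn. destruct (classic (exists i0, (i0 < k)%nat /\ nth i0 w false = true)) as [Hone|Hnone].
      - assert (Hl2 : forall t, (t <= length (sig k s n (X t)))%nat).
        { induction t; [lia|]. destruct (proj2 (proj2 (proj2 (HS t (Inv t)))) Hone n Hn) as [idx [Hi Hnt]].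
          apply nth_true_lt in Hnt. lia. }
        intros N. destruct (proj2 (proj2 (proj2 (HS N (Inv N)))) Hone n Hn) as [idx [Hi Hnt]].
        exists (S N), idx. split; auto. specialize (Hl2 N). lia.
      - apply (auto_good k s); auto.
        + intro o. pose proof (wz k s w Hk Her o). destruct (nth (o mod k) w false) eqn:E; auto.
          exfalso. apply Hnone. exists (o mod k)%nat. split; auto. apply Nat.mod_upper_bound; auto.
        + apply chain_sig; auto.
        + exact (Hunb (S n) ltac:(lia)). }
    exists (inf_val (limw X)). split; [apply V2|]. split.
    + assert (Hp : prw q (limw X)). { rewrite <- HX0. apply pre_limw; auto. }
      rewrite <- Hq1 in Hq2. pose proof (close_val q _ y Hp Hq2). rewrite Hq1 in H. lra.
    + exists p. split; [unfold p; lia|].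
      rewrite (chain_orbit k s w X p Hk Her HXc).
      * f_equal. apply functional_extensionality. intro i.
        rewrite (limw_spec X i (S i) HXc) by (specialize (Hlen (S i)); lia).
        assert (Hi : (i < length (X (S i)))%nat) by (specialize (Hlen (S i)); lia).
        rewrite (limw_spec (fun j => sig k s p (X j)) i (S (S i))) by (try apply chain_sig; auto;
          specialize (P1 (S i)); apply pl_length in P1; lia).
        symmetry. apply pl_nth; auto.
      * intros n Hn. split; [now apply Hgood|]. apply Hunb. lia.
  -
    exists (1/4). split; [lra|]. intros x delta Hx Hd.
    destruct (small_m delta Hd) as [L HL]. destruct (approx L x Hx) as [X0 [HX01 HX02]].
    destruct (erase_ge k s Hee X0) as [m Hm].
    assert (Hpt : forall T, exists z, in_I z /\ Rabs (x - z) < delta /\ exists v,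
               prw T v /\ Nat.iter m (f_sigma k s w) z = inf_val v).
    { intro T. destruct (ext k s w Hk Her Hopt m X0 T) as [G HG]. rewrite (Hm m (le_n _)) in HG.
      destruct (build_chain (DStep k s) (dstep_ex k s w Hk Her Hopt Hee) (X0 ++ G)) as [X [HX0 HS]].
      destruct (dchain_good k s X HS) as [HXc _].
      exists (inf_val (limw X)). split; [apply V2|]. split.
      - assert (Hp : prw X0 (limw X)). { eapply pre_pl; [apply (pl_app X0 G)|]. rewrite <- HX0. apply pre_limw; auto. }
        rewrite <- HX01 in HX02. pose proof (close_val X0 _ x Hp HX02). rewrite HX01 in H. rewrite Rabs_minus_sym. lra.
      - exists (limw (fun j => sig k s m (X j))). split.
        + eapply pre_pl; [exact HG|]. rewrite <- HX0. apply (pre_limw (fun j => sig k s m (X j))). apply chain_sig; auto.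
        + apply dorbit; auto. }
    destruct (Hpt [true; true; true]) as [z1 [Hz1 [Hd1 [v1 [Hv1 He1]]]]].
    destruct (Hpt [false; false; false]) as [z0 [Hz0 [Hd0 [v0 [Hv0 He0]]]]].
    pose proof (Vbounds _ _ Hv1) as B1. pose proof (Vbounds _ _ Hv0) as B0. simpl in B1, B0.
    destruct (Rle_lt_dec (1/4) (Rabs (Nat.iter m (f_sigma k s w) x - Nat.iter m (f_sigma k s w) z0))) as [h|h].
    + exists z0. split; auto. split; auto. exists m. exact h.
    + exists z1. split; auto. split; auto. exists m. rewrite He1. rewrite He0 in h. revert h.
      unfold Rabs. destruct (Rcase_abs _); destruct (Rcase_abs _); intros; lra.
Qed.

Theorem mainTheorem15 (k : nat) (s : nat -> bool -> list bool) (w : list bool) :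
  (2 <= k)%nat ->
  erasing_with k s w ->
  eventually_erases k s ->
  w <> repeat true k ->
  optimal k s ->
  dense_orbit (f_sigma k s w) /\
  dense_periodic (f_sigma k s w) /\
  sensitive (f_sigma k s w).
Proof.
  intros Hk Her Hee _ Hopt. exact (main k s w Hk Her Hee Hopt).
Qed.
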